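(* Let $f\in S$ be nonzero. Then, inside $\mathrm{Der}_{\mathbb K}(S^h)$, $$D(f^h)\cap S^h\langle\partial_{x_1},\dots,\partial_{x_n}\rangle=D(f)^h.$$
   Context: $\mathbb K$ a field of characteristic zero, $S=\mathbb K[x_1,\dots,x_n]$, $S^h=\mathbb K[x_1,\dots,x_n,h]$ with the standard grading by total degree. For any polynomial ring $R$ over $\mathbb K$, $\mathrm{Der}_{\mathbb K}(R)$ is the free $R$-module on the partial derivatives; for $g\in R$, $e\ge1$, $D(g;e)=\{\delta:\delta(g)\in g^eR\}$, and for nonzero $F=cF_1^{e_1}\cdots F_r^{e_r}$ (pairwise non-associate irreducibles, $c\in\mathbb K^*$), $D(F)=\bigcap_iD(F_i;e_i)$; this defines $D(f)\subseteq\mathrm{Der}_{\mathbb K}(S)$ and $D(f^h)\subseteq\mathrm{Der}_{\mathbb K}(S^h)$ (basis $\partial_{x_1},\dots,\partial_{x_n},\partial_h$). For nonzero $g\in S$ of degree $e$, $g^h=h^e g(x_1/h,\dots,x_n/h)$. For nonzero $\delta=\sum_{i=1}^n a_i\partial_{x_i}\in\mathrm{Der}_{\mathbb K}(S)$ with $e=\max_i\deg a_i$, $\delta^h=\sum_{a_i\neq0}h^{e-\deg a_i}a_i^h\,\partial_{x_i}$. $D(f)^h$ is the $S^h$-submodule of $S^h\langle\partial_{x_1},\dots,\partial_{x_n}\rangle$ generated by $\{\delta^h:\ 0\ne\delta\in D(f)\}$. *)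

(* Defs.v *)
From mathcomp Require Import all_boot all_order all_algebra.
From mathcomp Require Import mpoly.
Set Implicit Arguments. Unset Strict Implicit. Unset Printing Implicit Defensive.
Import GRing.Theory.
Local Open Scope ring_scope.

Section Defs.
Variable K : fieldType.

(* A derivation of K[x_0..x_{k-1}]: its coordinates on the basis of partials. *)
Definition Der (k : nat) := 'I_k -> {mpoly K[k]}.

Definition der_nonzero k (d : Der k) : Prop := exists i, d i != 0.

Definition der_app k (d : Der k) (g : {mpoly K[k]}) : {mpoly K[k]} :=
  \sum_(i < k) d i * mderiv i g.

Definition mdvd k (p q : {mpoly K[k]}) : Prop := exists r, q = p * r.

Definition mirreducible k (g : {mpoly K[k]}) : Prop :=
  g != 0 /\ g \notin GRing.unit /\
  forall a b : {mpoly K[k]}, g = a * b -> a \in GRing.unit \/ b \in GRing.unit.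

Definition inDe k (g : {mpoly K[k]}) (e : nat) (d : Der k) : Prop :=
  mdvd (g ^+ e) (der_app d g).

(* D(F) = intersection of D(F_i; e_i) over the irreducible factors F_i of F,
   e_i being the exact multiplicity of F_i in F. *)
Definition inD k (F : {mpoly K[k]}) (d : Der k) : Prop :=
  forall (g : {mpoly K[k]}) (e : nat), mirreducible g -> (0 < e)%N ->
    mdvd (g ^+ e) F -> ~ mdvd (g ^+ e.+1) F -> inDe g e d.

Definition tdeg k (p : {mpoly K[k]}) : nat := (msize p).-1.

(* x_i in S^h = K[x_0..x_{n-1}, h]; h is the last variable ord_max *)
Definition xvar n (i : 'I_n) : {mpoly K[n.+1]} := 'X_(widen_ord (leqnSn n) i).
Definition hvar n : {mpoly K[n.+1]} := 'X_(@ord_max n).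

(* g^h = h^{deg g} g(x/h) *)
Definition homogp n (g : {mpoly K[n]}) : {mpoly K[n.+1]} :=
  \sum_(m <- msupp g)
     g@_m *: ((\prod_(i < n) xvar i ^+ m i) * hvar n ^+ (tdeg g - mdeg m)).

Definition der_homog n (d : Der n) : Der n.+1 :=
  fun j => match unlift ord_max j with
           | Some i => hvar n ^+ (\max_(i' < n) tdeg (d i') - tdeg (d i)) * homogp (d i)
           | None => 0
           end.

(* membership in D(f)^h: S^h-linear combination of delta^h, 0 != delta in D(f) *)
Definition inDh n (f : {mpoly K[n]}) (t : Der n.+1) : Prop :=
  exists (N : nat) (c : 'I_N -> {mpoly K[n.+1]}) (ds : 'I_N -> Der n),
    (forall l, der_nonzero (ds l) /\ inD f (ds l)) /\
    forall j, t j = \sum_(l < N) c l * der_homog (ds l) j.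

End Defs.

(* Main.v *)
Require Import Defs.
From HB Require Import structures.
From mathcomp Require Import all_boot all_order all_algebra.
From mathcomp Require Import mpoly.
From mathcomp Require Import zify.
Set Implicit Arguments. Unset Strict Implicit. Unset Printing Implicit Defensive.
Import GRing.Theory.
Local Open Scope ring_scope.
Section Lsupp.
Variable K : fieldType.
Variable k : nat.
Variable V : lmodType K.
Variable F : 'X_{1..k} -> V.

Definition lsupp (g : {mpoly K[k]}) : V := \sum_(mu <- msupp g) g@_mu *: F mu.

Lemma lsuppE_sub g (r : seq 'X_{1..k}) : uniq r -> {subset msupp g <= r} ->
  lsupp g = \sum_(mu <- r) g@_mu *: F mu.
Proof.
move=> ur sub; rewrite [RHS](bigID (mem (msupp g))) /=.
rewrite [X in _ = _ + X]big1 ?addr0; last first.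
  by move=> mu /memN_msupp_eq0 ->; rewrite scale0r.
rewrite -big_filter /lsupp; apply: perm_big; apply: uniq_perm.
- exact: msupp_uniq.
- exact: filter_uniq.
by move=> mu; rewrite mem_filter /=; apply/idP/andP => [h|[]//]; split => //; apply: sub.
Qed.

Lemma lsupp_is_linear : linear lsupp.
Proof.
move=> c p q /=.
set r := undup (msupp p ++ msupp q ++ msupp (c *: p + q)).
have ur : uniq r by apply: undup_uniq.
rewrite (@lsuppE_sub _ r) //; last by move=> x hx; rewrite mem_undup !mem_cat hx !orbT.
rewrite (@lsuppE_sub p r) //; last by move=> x hx; rewrite mem_undup !mem_cat hx.
rewrite (@lsuppE_sub q r) //; last by move=> x hx; rewrite mem_undup !mem_cat hx !orbT.
rewrite scaler_sumr -big_split /=; apply: eq_bigr => mu _.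
by rewrite mcoeffD mcoeffZ scalerDl scalerA.
Qed.

HB.instance Definition _ := GRing.isLinear.Build K {mpoly K[k]} V _ lsupp lsupp_is_linear.

Lemma lsuppX m : lsupp 'X_[m] = F m.
Proof. by rewrite /lsupp msuppX big_seq1 mcoeffX eqxx scale1r. Qed.

End Lsupp.

Lemma lin_mpolyE (K : fieldType) k (V : lmodType K) (L : {linear {mpoly K[k]} -> V}) p :
  L p = lsupp (fun m => L 'X_[m]) p.
Proof. by rewrite {1}[p]mpolyE linear_sum; apply: eq_bigr => m _; rewrite linearZ. Qed.

Lemma lin_mpoly_eq (K : fieldType) k (V : lmodType K) (L1 L2 : {linear {mpoly K[k]} -> V}) :
  (forall m, L1 'X_[m] = L2 'X_[m]) -> forall p, L1 p = L2 p.
Proof. by move=> h p; rewrite lin_mpolyE (lin_mpolyE L2); apply: eq_bigr => m _; rewrite h. Qed.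
Section Aux.
Variable K : fieldType.
Variable n : nat.
Local Notation S := {mpoly K[n]}.
Local Notation T := {mpoly K[n.+1]}.
Local Notation wi := (widen_ord (leqnSn n)).
Implicit Types (g a b : {mpoly K[n]}).

Lemma lift_max_wi (i : 'I_n) : lift ord_max i = wi i.
Proof. by apply/val_inj; rewrite /= /bump leqNgt ltn_ord. Qed.

Lemma unlift_wi (i : 'I_n) : unlift ord_max (wi i) = Some i.
Proof. by rewrite -lift_max_wi liftK. Qed.

Definition mdrop (m : 'X_{1..n.+1}) : 'X_{1..n} := [multinom m (wi i) | i < n].
Definition mext (mu : 'X_{1..n}) (k : nat) : 'X_{1..n.+1} :=
  [multinom (if unlift ord_max j is Some i then mu i else k) | j < n.+1].

Lemma mext_wi mu k i : mext mu k (wi i) = mu i.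
Proof. by rewrite mnmE unlift_wi. Qed.
Lemma mext_max mu k : mext mu k ord_max = k.
Proof. by rewrite mnmE unlift_none. Qed.
Lemma mdrop_mext mu k : mdrop (mext mu k) = mu.
Proof. by apply/mnmP => i; rewrite mnmE mext_wi. Qed.
Lemma mext_mdrop m : mext (mdrop m) (m ord_max) = m.
Proof.
apply/mnmP => j; rewrite mnmE; case: unliftP => [i ->|-> //].
by rewrite mnmE lift_max_wi.
Qed.
Lemma mdeg_split m : mdeg m = (mdeg (mdrop m) + m ord_max)%N.
Proof. by rewrite !mdegE big_ord_recr /=; congr (_ + _)%N; apply: eq_bigr => i _; rewrite mnmE. Qed.
Lemma mdeg_mext mu k : mdeg (mext mu k) = (mdeg mu + k)%N.
Proof. by rewrite mdeg_split mdrop_mext mext_max. Qed.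


Definition dhT : n.+1.-tuple S :=
  [tuple (if unlift ord_max j is Some i then 'X_i else 1) | j < n.+1].
Definition dh (p : T) : S := comp_mpoly dhT p.
HB.instance Definition _ := GRing.Linear.copy dh (comp_mpoly dhT).
HB.instance Definition _ := GRing.RMorphism.copy dh (comp_mpoly dhT).

Lemma dhZ c p : dh (c *: p) = c *: dh p.
Proof. exact: linearZ. Qed.
Lemma dhD p q : dh (p + q) = dh p + dh q.
Proof. exact: raddfD. Qed.
Lemma dhM p q : dh (p * q) = dh p * dh q.
Proof. exact: rmorphM. Qed.
Lemma dh1 : dh 1 = 1.
Proof. exact: rmorph1. Qed.
Lemma dh_sum I (r : seq I) (P : pred I) (F : I -> T) : dh (\sum_(i <- r | P i) F i) = \sum_(i <- r | P i) dh (F i).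
Proof. exact: raddf_sum. Qed.
Lemma dhXn p k : dh (p ^+ k) = dh p ^+ k.
Proof. exact: rmorphXn. Qed.

Lemma dhX m : dh 'X_[m] = 'X_[mdrop m].
Proof.
rewrite /dh comp_mpolyX big_ord_recr /= tnth_mktuple unlift_none expr1n mulr1.
rewrite [RHS]mpolyXE_id; apply: eq_bigr => i _.
by rewrite tnth_mktuple unlift_wi mnmE.
Qed.

Lemma wi_eq (i j : 'I_n) : (wi i == wi j) = (i == j).
Proof. by rewrite -val_eqE /= val_eqE. Qed.

Lemma mdropU i : mdrop U_(wi i) = U_(i)%MM.
Proof. by apply/mnmP => j; rewrite !mnmE wi_eq. Qed.

Lemma mdropUmax : mdrop U_(ord_max) = 0%MM.
Proof.
apply/mnmP => j; rewrite !mnmE; case: eqP => // E.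
have := ltn_ord j; have -> : (j : nat) = val (wi j) by []. by rewrite -E /= ltnn.
Qed.

Lemma dh_xvar i : dh (xvar K i) = 'X_i.
Proof. by rewrite /xvar dhX mdropU. Qed.

Lemma dh_hvar : dh (hvar K n) = 1.
Proof. by rewrite /hvar dhX mdropUmax mpolyX0. Qed.

Lemma mdropB m i : mdrop (m - U_(wi i)) = (mdrop m - U_(i))%MM.
Proof. by apply/mnmP => j; rewrite mnmE (mnmBE (wi j)) (mnmBE j) !mnmE wi_eq. Qed.

Lemma dh_deriv i p : dh (mderiv (wi i) p) = mderiv i (dh p).
Proof.
pose L1 : {linear T -> S} := dh \o mderiv (wi i).
pose L2 : {linear T -> S} := mderiv i \o dh.

have := @lin_mpoly_eq K n.+1 _ L1 L2.
move=> /(_ _ p) /=; apply => m /=; rewrite mderivX linearZ /= dhX dhX mderivX mdropB.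
by rewrite mnmE.
Qed.


Lemma Xmext mu k :
  'X_[mext mu k] = (\prod_(i < n) xvar K i ^+ mu i) * hvar K n ^+ k :> T.
Proof.
rewrite mpolyXE_id big_ord_recr /= mext_max; congr (_ * _).
by apply: eq_bigr => i _; rewrite mext_wi.
Qed.

Definition hom (d : nat) : {linear S -> T} :=
  lsupp (fun mu => 'X_[mext mu (d - mdeg mu)] : T).

Lemma homE d g : hom d g = \sum_(mu <- msupp g) g@_mu *: ('X_[mext mu (d - mdeg mu)] : T).
Proof. by []. Qed.

Lemma homZ d c g : hom d (c *: g) = c *: hom d g.
Proof. exact: linearZ. Qed.
Lemma hom_sum d I (r : seq I) (P : pred I) (F : I -> S) : hom d (\sum_(i <- r | P i) F i) = \sum_(i <- r | P i) hom d (F i).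
Proof. exact: raddf_sum. Qed.

Lemma homX d mu : hom d 'X_[mu] = 'X_[mext mu (d - mdeg mu)].
Proof. exact: lsuppX. Qed.

Lemma homogpE g : homogp g = hom (tdeg g) g.
Proof. by rewrite /homogp homE; apply: eq_bigr => mu _; rewrite Xmext. Qed.

Lemma dh_hom d g : dh (hom d g) = g.
Proof.
rewrite [in RHS](mpolyE g) homE linear_sum; apply: eq_bigr => mu _.
by rewrite linearZ /= dhX mdrop_mext.
Qed.

Lemma hom_homog d g : (msize g <= d.+1)%N -> hom d g \is d.-homog.
Proof.
move=> hs; rewrite homE big_seq; apply: rpred_sum => mu hmu.
apply: dhomogZ; rewrite dhomogX; apply/eqP.
rewrite -[LHS]/(mdeg (mext mu (d - mdeg mu))) mdeg_mext subnKC //.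
by rewrite -ltnS; apply: leq_trans hs; apply: msize_mdeg_lt.
Qed.

Lemma hvarXmext mu (a : nat) : hvar K n * 'X_[mext mu a] = 'X_[mext mu a.+1].
Proof.
rewrite /hvar -mpolyXD; congr 'X_[_]; apply/mnmP => j.
rewrite mnmDE !mnmE; case: unliftP => [i ->|->]; last by rewrite eqxx.
by rewrite (negbTE (neq_lift _ _)).
Qed.

Lemma hvarXn_hom k d g : (msize g <= d.+1)%N -> hvar K n ^+ k * hom d g = hom (d + k) g.
Proof.
move=> hs; rewrite !homE mulr_sumr !big_seq; apply: eq_bigr => mu hmu.
rewrite -scalerAr; congr (_ *: _).
have hd : (mdeg mu <= d)%N by rewrite -ltnS; apply: leq_trans hs; apply: msize_mdeg_lt.
rewrite addnC -addnBA //; elim: k => [|k IH]; first by rewrite expr0 mul1r.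
by rewrite exprS -mulrA IH hvarXmext addSn.
Qed.

Lemma homog_hom d p : p \is d.-homog -> p = hom d (dh p).
Proof.
move=> /dhomogP hp.
have -> : hom d (dh p) = \sum_(m <- msupp p) p@_m *: hom d (dh 'X_[m]).
  by rewrite {1}[p]mpolyE dh_sum hom_sum; apply: eq_bigr => m _; rewrite dhZ homZ.
rewrite {1}[p]mpolyE big_seq [RHS]big_seq.
apply: eq_bigr => m hm; rewrite dhX homX; congr (_ *: 'X_[_]).
have E : mdeg m = d := hp m hm.
by rewrite -E mdeg_split addKn mext_mdrop.
Qed.

Lemma msize_dh d p : p \is d.-homog -> (msize (dh p) <= d.+1)%N.
Proof.
move=> /dhomogP hp; rewrite {1}[p]mpolyE dh_sum.
apply: leq_trans (msize_sum _ _ _) _; apply/bigmax_leqP_seq => m hm _.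
rewrite dhZ; apply: leq_trans (msizeZ_le _ _) _.
have E : mdeg m = d := hp m hm.
by rewrite dhX msizeX ltnS -E (mdeg_split m) leq_addr.
Qed.

Lemma homog_homogp d p : p \is d.-homog ->
  (tdeg (dh p) <= d)%N /\ p = hvar K n ^+ (d - tdeg (dh p)) * homogp (dh p).
Proof.
move=> hp; have hs := msize_dh hp.
have ht : (tdeg (dh p) <= d)%N by rewrite /tdeg -subn1 leq_subLR add1n.
split => //; rewrite homogpE hvarXn_hom ?leqSpred // addnC subnK //.
exact: homog_hom.
Qed.


Lemma tdeg_le g : (msize g <= (tdeg g).+1)%N.
Proof. by rewrite /tdeg leqSpred. Qed.

Lemma homogp_homog g : homogp g \is (tdeg g).-homog.
Proof. by rewrite homogpE; apply: hom_homog; apply: tdeg_le. Qed.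

Lemma dh_homogp g : dh (homogp g) = g.
Proof. by rewrite homogpE dh_hom. Qed.

Lemma mext00 : mext 0%MM 0 = 0%MM.
Proof. by apply/mnmP => j; rewrite !mnmE; case: unlift => // i; rewrite mnm0E. Qed.

Lemma homogpC c : homogp (c%:MP : S) = c%:MP.
Proof.
rewrite homogpE /tdeg msizeC -[c%:MP]mulr1 mul_mpolyC -mpolyX0 homZ homX mdeg0.
have -> : ((c != 0) : nat).-1 = 0%N by case: (c != 0).
by rewrite sub0n mext00 mpolyX0 -mul_mpolyC mulr1.
Qed.

Lemma homogp0 : homogp (0 : S) = 0.
Proof. by rewrite -mpolyC0 homogpC. Qed.

Lemma homogp1 : homogp (1 : S) = 1.
Proof. by rewrite -mpolyC1 homogpC. Qed.

Lemma homogp_eq0 g : (homogp g == 0) = (g == 0).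
Proof.
apply/eqP/eqP => [h|->]; last exact: homogp0.
by rewrite -(dh_homogp g) h raddf0.
Qed.

Lemma homogpM a b : homogp (a * b) = homogp a * homogp b.
Proof.
have [->|na] := eqVneq a 0; first by rewrite mul0r homogp0 mul0r.
have [->|nb] := eqVneq b 0; first by rewrite mulr0 homogp0 mulr0.
have hP := dhomogM (homogp_homog a) (homogp_homog b).
have [_ E] := homog_homogp hP.
rewrite [RHS]E dhM !dh_homogp.
have -> : tdeg (a * b) = (tdeg a + tdeg b)%N.
  rewrite /tdeg (msizeM na nb).
  move: (na) (nb); rewrite -!msize_poly_eq0.
  case: (msize a) => // x _; case: (msize b) => // y _.
  by rewrite addSn addnS.
by rewrite subnn expr0 mul1r.
Qed.

Lemma homogpX a k : homogp (a ^+ k) = homogp a ^+ k.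
Proof. by elim: k => [|k IH]; rewrite ?expr0 ?homogp1 // !exprS homogpM IH. Qed.

Lemma mcoeff_hvarM (q : T) (m : 'X_{1..n.+1}) : m ord_max = 0%N -> (hvar K n * q)@_m = 0.
Proof.
move=> hm; apply/eqP; rewrite mcoeff_eq0 mulrC /hvar.
rewrite (perm_mem (msuppMX _ _)); apply/mapP => -[m' _ E].
by move: hm; rewrite E mnmDE mnm1E eqxx.
Qed.

Lemma homogp_coeff_top g : g != 0 -> (homogp g)@_(mext (mlead g) 0) = g@_(mlead g).
Proof.
move=> ng; rewrite homogpE homE (raddf_sum (mcoeff _)).
have hl := mlead_supp ng.
have ht : tdeg g = mdeg (mlead g) by rewrite /tdeg -(mlead_deg ng).
rewrite (bigD1_seq (mlead g)) ?msupp_uniq //= mcoeffZ mcoeffX ht subnn eqxx mulr1.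
rewrite big1 ?addr0 // => mu hmu; rewrite mcoeffZ mcoeffX.
case: eqP => [E|]; last by rewrite mulr0.
by move: hmu; rewrite -(mdrop_mext mu (mdeg (mlead g) - mdeg mu)) E mdrop_mext eqxx.
Qed.

Lemma homogp_ndvd_h g (q : T) : g != 0 -> homogp g != hvar K n * q.
Proof.
move=> ng; apply/eqP => E; have := homogp_coeff_top ng.
rewrite E mcoeff_hvarM ?mext_max // => /esym /eqP.
by rewrite mcoeff_eq0 mlead_supp.
Qed.

End Aux.

Section MLast.
Variable K : fieldType.
Variable k : nat.
Implicit Types (p q : {mpoly K[k]}).

Lemma mlastcM p q : (p * q)@_(mlast p + mlast q) = p@_(mlast p) * q@_(mlast q).
Proof.
have [->|nz_p] := eqVneq p 0; first by rewrite !mul0r !mcoeff0 mul0r.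
have [->|nz_q] := eqVneq q 0; first by rewrite !mulr0 !mcoeff0 mulr0.
rewrite mpolyME (bigD1_seq (mlast p, mlast q)) /=; first last.
+ by rewrite allpairs_uniq ?msupp_uniq // => -[? ?] [].
+ by rewrite allpairs_f // mlast_supp.
rewrite mcoeffD mcoeffZ mcoeffX eqxx mulr1.
rewrite big_seq_cond raddf_sum /= big1 ?addr0 //.
case=> y1 y2 /andP [/allpairsP [[m1 m2] /= [m1p m2q [-> ->]]] ne].
rewrite mcoeffZ mcoeffX.
have l1 := mlast_lemc m1p; have l2 := mlast_lemc m2q.
suff lt : ((mlast p + mlast q)%MM < (m1 + m2)%MM)%O by rewrite (Order.POrderTheory.gt_eqF lt) mulr0.
move: l1; rewrite Order.POrderTheory.le_eqVlt => /predU1P[E1|lt1]; last exact: ltmc_le_add.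
move: l2; rewrite Order.POrderTheory.le_eqVlt => /predU1P[E2|lt2].
  by move: ne; rewrite E1 E2 eqxx.
by rewrite E1; apply: lemc_lt_add.
Qed.

Lemma homog_factor (p a b : {mpoly K[k]}) d :
  p != 0 -> p \is d.-homog -> p = a * b -> a \is (mdeg (mlead a)).-homog.
Proof.
move=> np hp E.
have na : a != 0 by apply: contraNneq np => a0; rewrite E a0 mul0r.
have nb : b != 0 by apply: contraNneq np => b0; rewrite E b0 mulr0.
have /dhomogP hp' := hp.
have d1 : (mdeg (mlead a) + mdeg (mlead b))%N = d.
  have : mdeg (mlead p) = d := hp' _ (mlead_supp np).
  by rewrite E (mleadM na nb) mdegD.
have d2 : (mdeg (mlast a) + mdeg (mlast b))%N = d.
  suff hs : (mlast a + mlast b)%MM \in msupp p.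
    have : mdeg (mlast a + mlast b)%MM = d := hp' _ hs.
    by rewrite mdegD.
  rewrite mcoeff_msupp E mlastcM mulf_neq0 // -mcoeff_msupp mlast_supp //.
have la := lemc_mdeg (mlast_lemc (mlead_supp na)).
have lb := lemc_mdeg (mlast_lemc (mlead_supp nb)).
apply/dhomogP => m hm.
have u := lemc_mdeg (mlast_lemc hm); have v := lemc_mdeg (msupp_le_mlead hm).
change (mdeg m = mdeg (mlead a)); lia.
Qed.

End MLast.

Lemma mpoly_unitE (K : fieldType) k (p : {mpoly K[k]}) :
  (p \in GRing.unit) = (p == (p@_0)%:MP) && (p@_0 \in GRing.unit).
Proof. by []. Qed.

Section Irr.
Variable K : fieldType.
Variable n : nat.
Local Notation S := {mpoly K[n]}.
Local Notation T := {mpoly K[n.+1]}.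
Implicit Types (g a b : {mpoly K[n]}).

Lemma dh_unit (p : T) : p \in GRing.unit -> dh p \in GRing.unit.
Proof. exact: rmorph_unit. Qed.

Lemma homogp_unit g : (homogp g \in GRing.unit) = (g \in GRing.unit).
Proof.
apply/idP/idP => [/dh_unit|]; first by rewrite dh_homogp.
by rewrite mpoly_unitE => /andP [/eqP E hu]; rewrite E homogpC mpoly_unitE mcoeffC eqxx mulr1 eqxx.
Qed.

Lemma homogp_factor_eq g (a b : T) : g != 0 -> homogp g = a * b -> a = homogp (dh a).
Proof.
move=> ng E.
have nP : homogp g != 0 by rewrite homogp_eq0.
have ha := homog_factor nP (homogp_homog g) E.
have [_ Ea] := homog_homogp ha.
move: Ea; set k := (_ - _)%N => Ea.
case: k Ea => [|k] Ea; first by rewrite {1}Ea expr0 mul1r.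
have := homogp_ndvd_h (hvar K n ^+ k * homogp (dh a) * b) ng.
by rewrite E {1}Ea exprS !mulrA eqxx.
Qed.

Lemma mirr_homogp g : mirreducible g -> mirreducible (homogp g).
Proof.
move=> [ng [nu irr]]; split; first by rewrite homogp_eq0.
split; first by rewrite homogp_unit.
move=> a b E.
have Ea := homogp_factor_eq ng E.
have Eb : b = homogp (dh b) by apply: (homogp_factor_eq ng); rewrite E mulrC.
have : g = dh a * dh b by rewrite -dhM -E dh_homogp.
move=> /irr [ua|ub]; [left; rewrite Ea | right; rewrite Eb]; by rewrite homogp_unit.
Qed.

Lemma irr_factor_homogp f (g : T) : f != 0 -> mirreducible g -> mdvd g (homogp f) ->
  g = homogp (dh g) /\ mirreducible (dh g).
Proof.
move=> nf [ng [nu irr]] [r E].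
have Eg := homogp_factor_eq nf E.
split => //; split.
  by apply: contraNneq ng => e; rewrite Eg e homogp0.
split; first by apply: contraNN nu => u; rewrite Eg homogp_unit.
move=> a b E'; have : g = homogp a * homogp b by rewrite Eg E' homogpM.
by move=> /irr [ua|ub]; [left|right]; rewrite -homogp_unit.
Qed.

End Irr.

Section Deriv.
Variable K : fieldType.

Lemma mderiv_sum k (j : 'I_k) I (r : seq I) (P : pred I) (F : I -> {mpoly K[k]}) :
  mderiv j (\sum_(i <- r | P i) F i) = \sum_(i <- r | P i) mderiv j (F i).
Proof. exact: raddf_sum. Qed.

Lemma mderiv_homog k (j : 'I_k) d (p : {mpoly K[k]}) :
  p \is d.-homog -> mderiv j p \is d.-1.-homog.
Proof.
move=> /dhomogP hp; rewrite {1}[p]mpolyE mderiv_sum big_seq; apply: rpred_sum => m hm.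
rewrite mderivZ mderivX; apply: rpredZ.
have [E|nz] := eqVneq (m j) 0%N; first by rewrite E scale0r rpred0.
apply: rpredZ; rewrite dhomogX; apply/eqP.
have Ed : mdeg m = d := hp m hm.
have HE : (m - U_(j) + U_(j))%MM = m.
  apply/mnmP => i; rewrite mnmDE mnmBE mnm1E; case: eqP => [<-|_]; last by rewrite subn0 addn0.
  by rewrite subnK // lt0n.
change (mdeg (m - U_(j))%MM = d.-1); rewrite -Ed -{2}HE mdegD mdeg1 addn1.
by [].
Qed.

Variable n : nat.
Local Notation S := {mpoly K[n]}.
Local Notation T := {mpoly K[n.+1]}.
Local Notation wi := (widen_ord (leqnSn n)).
Implicit Types (g a b : {mpoly K[n]}).

Lemma dh_der_app (t : Der K n.+1) (p : T) : t ord_max = 0 ->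
  dh (der_app t p) = der_app (fun i => dh (t (wi i))) (dh p).
Proof.
move=> t0; rewrite /der_app big_ord_recr /= t0 mul0r addr0 dh_sum.
by apply: eq_bigr => i _; rewrite dhM dh_deriv.
Qed.

Lemma der_homog_max (d : Der K n) : der_homog d ord_max = 0.
Proof. by rewrite /der_homog unlift_none. Qed.

Lemma der_homog_wi (d : Der K n) i : der_homog d (wi i) =
  hvar K n ^+ (\max_(i' < n) tdeg (d i') - tdeg (d i)) * homogp (d i).
Proof. by rewrite /der_homog unlift_wi. Qed.

Lemma dh_der_homog (d : Der K n) i : dh (der_homog d (wi i)) = d i.
Proof. by rewrite der_homog_wi dhM dhXn dh_hvar expr1n mul1r dh_homogp. Qed.

Lemma hvarXn_homog k : hvar K n ^+ k \is k.-homog.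
Proof.
have := dhomogMn k (_ : hvar K n \is 1.-homog); rewrite mul1n; apply.
by rewrite dhomogX; apply/eqP; exact: mdeg1.
Qed.

Lemma der_homog_homog (d : Der K n) i :
  der_homog d (wi i) \is (\max_(i' < n) tdeg (d i')).-homog.
Proof.
rewrite der_homog_wi.
have := dhomogM (hvarXn_homog (\max_(i' < n) tdeg (d i') - tdeg (d i))) (homogp_homog (d i)).
by rewrite subnK //; apply: (leq_bigmax_cond (F := fun i' => tdeg (d i'))).
Qed.

Lemma der_app_homogp (d : Der K n) g : exists k,
  der_app (der_homog d) (homogp g) = hvar K n ^+ k * homogp (der_app d g).
Proof.
set E := (\max_(i' < n) tdeg (d i')).
have hP : der_app (der_homog d) (homogp g) \is (E + (tdeg g).-1).-homog.
  rewrite /der_app; apply: rpred_sum => j _.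
  case: (unliftP ord_max j) => [i ->|->]; last by rewrite der_homog_max mul0r rpred0.
  rewrite lift_max_wi; apply: dhomogM; first exact: der_homog_homog.
  exact/mderiv_homog/homogp_homog.
have [_ Ep] := homog_homogp hP.
exists (E + (tdeg g).-1 - tdeg (dh (der_app (der_homog d) (homogp g))))%N.
rewrite {1}Ep; congr (_ * homogp _).
rewrite dh_der_app ?der_homog_max // dh_homogp; apply: eq_bigr => i _.
by rewrite dh_der_homog.
Qed.

End Deriv.

Section Back.
Variable K : fieldType.
Variable n : nat.
Local Notation S := {mpoly K[n]}.
Local Notation T := {mpoly K[n.+1]}.
Local Notation wi := (widen_ord (leqnSn n)).

Lemma mdvd_mull k (p q c : {mpoly K[k]}) : mdvd p q -> mdvd p (c * q).
Proof. by move=> [r ->]; exists (c * r); rewrite mulrCA. Qed.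

Lemma mdvd_sum k (p : {mpoly K[k]}) I (r : seq I) (F : I -> {mpoly K[k]}) :
  (forall i, mdvd p (F i)) -> mdvd p (\sum_(i <- r) F i).
Proof.
move=> h; elim: r => [|x r [q IH]]; first by exists 0; rewrite big_nil mulr0.
have [q' E] := h x; exists (q' + q); rewrite big_cons mulrDr -E -IH //.
Qed.

Lemma der_app_lin k N (c : 'I_N -> {mpoly K[k]}) (D : 'I_N -> Der K k) (t : Der K k) g :
  (forall j, t j = \sum_(l < N) c l * D l j) ->
  der_app t g = \sum_(l < N) c l * der_app (D l) g.
Proof.
move=> tE; rewrite /der_app; under eq_bigr => j _ do rewrite tE mulr_suml.
rewrite exchange_big /=; apply: eq_bigr => l _; rewrite mulr_sumr.
by apply: eq_bigr => j _; rewrite mulrA.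
Qed.

Lemma der_homog_inD (f : S) (d : Der K n) : f != 0 -> inD f d -> inD (homogp f) (der_homog d).
Proof.
move=> nf hd g e irr e0 dv ndv.
have dv1 : mdvd g (homogp f).
  case: dv => r E; exists (g ^+ e.-1 * r); rewrite E mulrA -exprS prednK //.
have [Eg irrG] := irr_factor_homogp nf irr dv1.
set G := dh g in Eg irrG.
have dvG : mdvd (G ^+ e) f.
  case: dv => r E; exists (dh r); by rewrite -(dh_homogp f) E dhM dhXn.
have ndvG : ~ mdvd (G ^+ e.+1) f.
  move=> [r E]; apply: ndv; exists (homogp r); by rewrite E homogpM homogpX -Eg.
have [q Eq] := hd G e irrG e0 dvG ndvG.
have [k Ek] := der_app_homogp d G.
rewrite /inDe Eg Ek Eq homogpM homogpX -Eg.
by exists (hvar K n ^+ k * homogp q); rewrite mulrCA.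
Qed.

Lemma back_dir (f : S) (t : Der K n.+1) : f != 0 -> inDh f t -> inD (homogp f) t /\ t ord_max = 0.
Proof.
move=> nf [N [c [ds [hds tE]]]]; split; last first.
  by rewrite tE big1 // => l _; rewrite der_homog_max mulr0.
move=> g e irr e0 dv ndv; rewrite /inDe (der_app_lin _ tE).
apply: mdvd_sum => l; apply: mdvd_mull.
by apply: (der_homog_inD nf (proj2 (hds l))).
Qed.

End Back.

Section Pi.
Variable K : fieldType.
Variable k : nat.
Implicit Types (p q r : {mpoly K[k]}).

Lemma pihomog_sum e I (s : seq I) (P : pred I) (F : I -> {mpoly K[k]}) :
  pihomog mdeg e (\sum_(i <- s | P i) F i) = \sum_(i <- s | P i) pihomog mdeg e (F i).
Proof. exact: raddf_sum. Qed.

Lemma pihomogZ' e c p : pihomog mdeg e (c *: p) = c *: pihomog mdeg e p.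
Proof. exact: linearZ. Qed.

Lemma pihomog_homog e d r : r \is d.-homog -> pihomog mdeg e r = if d == e then r else 0.
Proof.
move=> hr; case: eqP => [<-|ne]; first exact: pihomog_dE.
by apply: pihomog_ne0 hr; apply/eqP.
Qed.

Lemma pihomog_mul e c p q : q \is c.-homog ->
  pihomog mdeg e (p * q) = (if (c <= e)%N then pihomog mdeg (e - c) p else 0) * q.
Proof.
move=> hq; rewrite {1}[p]mpolyE mulr_suml pihomog_sum.
case: ifP => ce; last first.
  rewrite mul0r big1 // => m _; rewrite -scalerAl pihomogZ'.
  rewrite (pihomog_homog e (dhomogM (_ : 'X_[m] \is (mdeg m).-homog) hq)); last by rewrite dhomogX.
  by case: eqP => [E|]; rewrite ?scaler0 //; move: ce; rewrite -E leq_addl.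
have -> : pihomog mdeg (e - c) p = \sum_(m <- msupp p) p@_m *: pihomog mdeg (e - c) 'X_[m].
  by rewrite {1}[p]mpolyE pihomog_sum; apply: eq_bigr => m _; rewrite pihomogZ'.
rewrite mulr_suml; apply: eq_bigr => m _.
rewrite -scalerAl pihomogZ' -scalerAl; congr (_ *: _).
rewrite (pihomog_homog e (dhomogM (_ : 'X_[m] \is (mdeg m).-homog) hq)); last by rewrite dhomogX.
rewrite pihomogX; have E : ((mdeg m + c)%N == e) = (mdeg m == (e - c)%N).
  by apply/eqP/eqP; lia.
by rewrite -[mdeg m]/(mdeg m) E; case: ifP; rewrite ?mul0r.
Qed.

End Pi.

Section Fwd.
Variable K : fieldType.
Variable n : nat.
Local Notation S := {mpoly K[n]}.
Local Notation T := {mpoly K[n.+1]}.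
Local Notation wi := (widen_ord (leqnSn n)).

Definition tdp (t : Der K n.+1) (d : nat) : Der K n.+1 := fun j => pihomog mdeg d (t j).
Definition dlt (t : Der K n.+1) (d : nat) : Der K n := fun i => dh (tdp t d (wi i)).

Lemma tdp_max t d : t ord_max = 0 -> tdp t d ord_max = 0.
Proof. by rewrite /tdp => ->; apply: raddf0. Qed.

Lemma dlt_inD (f : S) t d : inD (homogp f) t -> t ord_max = 0 -> inD f (dlt t d).
Proof.
move=> ht t0 G e irr e0 dvG ndvG.
set g := homogp G.
have irrg : mirreducible g := mirr_homogp irr.
have dvg : mdvd (g ^+ e) (homogp f).
  by case: dvG => r E; exists (homogp r); rewrite E homogpM homogpX.
have ndvg : ~ mdvd (g ^+ e.+1) (homogp f).
  move=> [r E]; apply: ndvG; exists (dh r).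
  by rewrite -(dh_homogp f) E dhM dhXn dh_homogp.
have [Q EQ] := ht g e irrg e0 dvg ndvg.
set c := (tdeg G).-1.
have Htd : der_app (tdp t d) g = pihomog mdeg (d + c) (der_app t g).
  rewrite /der_app pihomog_sum; apply: eq_bigr => j _.
  by rewrite (pihomog_mul _ _ (mderiv_homog j (homogp_homog G))) leq_addl addnK.
have [Q' EQ'] : mdvd (g ^+ e) (der_app (tdp t d) g).
  rewrite Htd EQ mulrC (pihomog_mul _ _ (dhomogMn e (homogp_homog G))).
  by eexists; rewrite mulrC.
rewrite /inDe; exists (dh Q').
by rewrite -(dh_homogp G) -dh_der_app ?tdp_max // EQ' dhM dhXn.
Qed.

Lemma dlt_repr t d : t ord_max = 0 -> [exists j, tdp t d j != 0] ->
  der_nonzero (dlt t d) /\ forall j, tdp t d j =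
    hvar K n ^+ (d - \max_(i < n) tdeg (dlt t d i)) * der_homog (dlt t d) j.
Proof.
move=> t0 /existsP [j0 nj0].
have H i : (tdeg (dlt t d i) <= d)%N /\
    tdp t d (wi i) = hvar K n ^+ (d - tdeg (dlt t d i)) * homogp (dlt t d i).
  exact: (homog_homogp (pihomogP mdeg d (t (wi i)))).
have HE : (\max_(i < n) tdeg (dlt t d i) <= d)%N.
  by apply/bigmax_leqP => i _; case: (H i).
split.
  case: (unliftP ord_max j0) nj0 => [i ->|->]; last by rewrite tdp_max // eqxx.
  rewrite lift_max_wi => nz; exists i; apply: contraNneq nz => e0.
  by case: (H i) => _ ->; rewrite e0 homogp0 mulr0.
move=> j; case: (unliftP ord_max j) => [i ->|->]; last by rewrite tdp_max // der_homog_max mulr0.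
rewrite lift_max_wi der_homog_wi; case: (H i) => hi ->; rewrite mulrA -exprD.
have hm : (tdeg (dlt t d i) <= \max_(i' < n) tdeg (dlt t d i'))%N.
  exact: (leq_bigmax_cond (F := fun i' => tdeg (dlt t d i'))).
congr (_ ^+ _ * _); lia.
Qed.

Lemma fwd_dir (f : S) t : inD (homogp f) t -> t ord_max = 0 -> inDh f t.
Proof.
move=> ht t0.
set B := (\max_(j < n.+1) msize (t j)).
have tE j : t j = \sum_(d < B) tdp t d j.
  exact: (pihomog_partitionE (leq_bigmax (F := fun j => msize (t j)) j)).
case: (boolP [exists d : 'I_B, [exists j, tdp t d j != 0]]) => [/existsP [d0 hd0]|none].
  exists B, (fun d : 'I_B => if [exists j, tdp t d j != 0]
                  then hvar K n ^+ (d - \max_(i < n) tdeg (dlt t d i)) else 0),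
         (fun d : 'I_B => if [exists j, tdp t d j != 0] then dlt t d else dlt t d0).
  split.
    move=> l; case: ifP => h.
      by have [? _] := dlt_repr t0 h; split => //; apply: dlt_inD.
    by have [? _] := dlt_repr t0 hd0; split => //; apply: dlt_inD.
  move=> j; rewrite tE; apply: eq_bigr => d _; case: ifP => h.
    by case: (dlt_repr t0 h) => _ ->.
  by rewrite mul0r; move/negbT: h => /existsPn /(_ j) /negPn /eqP.
exists 0%N, (fun _ => 0), (fun _ => dlt t 0); split; first by case.
move=> j; rewrite big_ord0 tE big1 // => d _.
by move: none => /existsPn /(_ d) /existsPn /(_ j) /negPn /eqP.
Qed.

End Fwd.

Theorem mainTheorem13 (K : fieldType) (charK0 : [pchar K] =i pred0) (n : nat)
  (f : {mpoly K[n]}) (hf : f != 0) (t : Der K n.+1) :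
  (inD (homogp f) t /\ t ord_max = 0) <-> inDh f t.
Proof.
split; first by move=> [h t0]; apply: fwd_dir.
exact: back_dir.
Qed.
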